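(* Let $R$ be a commutative ring with nonzero identity, $\delta$ an expansion of ideals of $R$, and $I$ a proper ideal of $R$ with $\delta(\delta(I))=\delta(I)$ (for instance $\delta=\delta_1$, $\delta_1(J)=\sqrt{J}$). Then: (1) If $I$ is a $\delta$-$n$-ideal and $a\notin\sqrt{0}$, then $\delta((I:a))=\delta(I)$. (2) $\delta(I)$ is an $n$-ideal if and only if $\delta(I)$ is a $\delta$-$n$-ideal. (3) If $J$ is an ideal of $R$ and $K$ an ideal of $R$ with $IK=JK$, where $I,J$ are $\delta$-$n$-ideals of $R$, $\delta(\delta(J))=\delta(J)$ and $K\cap(R\setminus\sqrt{0})\neq\emptyset$, then $\delta(I)=\delta(J)$. (4) If $K$ is an ideal of $R$ such that $IK$ and $I$ are $\delta$-$n$-ideals of $R$, $\delta(\delta(IK))=\delta(IK)$ and $K\cap(R\setminus\sqrt{0})\neq\emptyset$, then $\delta(IK)=\delta(I)$.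
   Context: An expansion of ideals of a ring $R$ is a map $\delta$ from the set of ideals of $R$ to itself such that $I\subseteq\delta(I)$ for every ideal $I$, and $\delta(I)\subseteq\delta(J)$ whenever $I\subseteq J$. $\sqrt{0}$ denotes the nilradical of $R$ and $(I:a)=\{r\in R: ra\in I\}$. Given an expansion $\delta$, a proper ideal $I$ of $R$ is a $\delta$-$n$-ideal if whenever $a,b\in R$ with $ab\in I$ and $a\notin\sqrt{0}$, then $b\in\delta(I)$. An $n$-ideal is a proper ideal $I$ such that $ab\in I$ and $a\notin\sqrt{0}$ imply $b\in I$. *)

(* Defs.v *)
From mathcomp Require Import all_boot all_algebra.
Set Implicit Arguments. Unset Strict Implicit. Unset Printing Implicit Defensive.
Import GRing.Theory.
Local Open Scope ring_scope.

Definition subsetR (R : Type) (A B : R -> Prop) : Prop := forall x, A x -> B x.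

Definition is_idl (R : comNzRingType) (I : R -> Prop) : Prop :=
  [/\ I 0, (forall x y, I x -> I y -> I (x + y)) & (forall r x, I x -> I (r * x))].

Definition proper_idl (R : comNzRingType) (I : R -> Prop) : Prop :=
  is_idl I /\ ~ I 1.

Definition nilrad (R : comNzRingType) : R -> Prop :=
  fun x => exists n : nat, x ^+ n = 0.

Definition radical (R : comNzRingType) (I : R -> Prop) : R -> Prop :=
  fun x => exists n : nat, I (x ^+ n).

Definition colon (R : comNzRingType) (I : R -> Prop) (a : R) : R -> Prop :=
  fun r => I (r * a).

(* product of ideals IK: the smallest ideal containing all products ab *)
Definition ideal_mul (R : comNzRingType) (I K : R -> Prop) : R -> Prop :=
  fun x => forall L : R -> Prop, is_idl L ->
    (forall a b, I a -> K b -> L (a * b)) -> L x.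

Definition expansion (R : comNzRingType) (delta : (R -> Prop) -> (R -> Prop)) : Prop :=
  [/\ (forall I, is_idl I -> is_idl (delta I)),
      (forall I, is_idl I -> subsetR I (delta I)) &
      (forall I J, is_idl I -> is_idl J -> subsetR I J -> subsetR (delta I) (delta J))].

Definition delta_n_ideal (R : comNzRingType) (delta : (R -> Prop) -> (R -> Prop))
  (I : R -> Prop) : Prop :=
  proper_idl I /\
  (forall a b : R, I (a * b) -> ~ nilrad a -> delta I b).

Definition n_ideal (R : comNzRingType) (I : R -> Prop) : Prop :=
  proper_idl I /\
  (forall a b : R, I (a * b) -> ~ nilrad a -> I b).

(* Main.v *)
Require Import Defs.
From mathcomp Require Import all_boot all_algebra.
From Stdlib Require Import FunctionalExtensionality PropExtensionality.
Import GRing.Theory.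
Local Open Scope ring_scope.

Lemma sub_antisym (R : Type) (A B : R -> Prop) :
  subsetR A B -> subsetR B A -> A = B.
Proof.
move=> h1 h2; apply: functional_extensionality => x.
apply: propositional_extensionality; split; [exact: h1|exact: h2].
Qed.

Lemma mul_in (R : comNzRingType) (I K : R -> Prop) a b :
  I a -> K b -> ideal_mul I K (a * b).
Proof. by move=> Ia Kb L _ HL; apply: HL. Qed.

Lemma mul_subl (R : comNzRingType) (I K : R -> Prop) :
  is_idl I -> subsetR (ideal_mul I K) I.
Proof.
move=> Iid x Hx; apply: Hx => //.
case: Iid => _ _ IM.
by move=> a b Ia _; rewrite mulrC; apply: IM.
Qed.

Lemma colon_idl (R : comNzRingType) (I : R -> Prop) a :
  is_idl I -> is_idl (colon I a).
Proof.
move=> [I0 ID IM]; split; rewrite /colon.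
- by rewrite mul0r.
- by move=> x y Hx Hy; rewrite mulrDl; apply: ID.
- by move=> r x Hx; rewrite -mulrA; apply: IM.
Qed.

Theorem proposition2p14 (R : comNzRingType)
  (delta : (R -> Prop) -> (R -> Prop)) (I : R -> Prop) :
  expansion delta -> proper_idl I -> delta (delta I) = delta I ->
  [/\ (* (1) *)
      (delta_n_ideal delta I -> forall a : R, ~ nilrad a ->
         delta (colon I a) = delta I),
      (* (2) *)
      (n_ideal (delta I) <-> delta_n_ideal delta (delta I)),
      (* (3) *)
      (forall J K : R -> Prop, is_idl J -> is_idl K ->
         ideal_mul I K = ideal_mul J K ->
         delta_n_ideal delta I -> delta_n_ideal delta J ->
         delta (delta J) = delta J ->
         (exists k, K k /\ ~ nilrad k) ->
         delta I = delta J) &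
      (* (4) *)
      (forall K : R -> Prop, is_idl K ->
         delta_n_ideal delta (ideal_mul I K) -> delta_n_ideal delta I ->
         delta (delta (ideal_mul I K)) = delta (ideal_mul I K) ->
         (exists k, K k /\ ~ nilrad k) ->
         delta (ideal_mul I K) = delta I)].
Proof.
move=> [Did Dext Dmon] [Iid I1] DDI; split.
- move=> [_ Hn] a Ha.
  have Cid := @colon_idl R I a Iid.
  apply: sub_antisym.
  + rewrite -DDI; apply: Dmon => //; first exact: Did.
    by move=> r Hr; apply: (Hn a r) => //; rewrite mulrC.
  + apply: Dmon => // r Hr; rewrite /colon.
    by case: Iid => _ _ IM; rewrite mulrC; apply: IM.
- split.
  + move=> [P Hn]; split => // a b Hab Ha.
    by apply: (Dext _ (Did _ Iid)); apply: Hn Hab Ha.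
  + by move=> [P Hn]; split => // a b Hab Ha; rewrite -DDI; apply: Hn Hab Ha.
- move=> J K Jid Kid HIJ [_ HnI] [_ HnJ] DDJ [k [Kk Hk]].
  apply: sub_antisym.
  + rewrite -DDJ; apply: Dmon => //; first exact: Did.
    move=> x Ix; apply: (HnJ k x) => //.
    apply: (@mul_subl R J K Jid); rewrite -HIJ mulrC; exact: mul_in.
  + rewrite -DDI; apply: Dmon => //; first exact: Did.
    move=> x Jx; apply: (HnI k x) => //.
    apply: (@mul_subl R I K Iid); rewrite HIJ mulrC; exact: mul_in.
- move=> K Kid [[IKid _] HnIK] _ DDIK [k [Kk Hk]].
  apply: sub_antisym.
  + by apply: Dmon => //; apply: mul_subl.
  + rewrite -DDIK; apply: Dmon => //; first exact: Did.
    move=> x Ix; apply: (HnIK k x) => //.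
    rewrite mulrC; exact: mul_in.
Qed.
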